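(* Let $N\ge1$, $D>0$ a fundamental discriminant with $D\equiv1\pmod{4N}$, $Q=[Na,b,c]\in\mathcal{Q}_{N,D,1}$, $d$ a positive divisor of $N$, and $Q^{(d)}:=[\frac{N}{d}a,b,cd]\in\mathcal{Q}_{N/d,D,1}$. Then the map $(u,v)\mapsto(u,dv)$ induces a bijection between $$\{(u,v)\in\mathbb{Z}^2/\Gamma_0^0(N/d,d)_{Q^{(d)}}:\ Q^{(d)}(u,v)>0,\ \gcd(v,N/d)=1\}$$ and $$\{(u,v)\in\mathbb{Z}^2/\Gamma_0(N)_Q:\ Q(u,v)>0,\ \gcd(v,N)=d\}.$$
   Context: $[a,b,c]=ax^2+bxy+cy^2$; $\mathcal{Q}_{M,D,1}:=\{[Ma,b,c]:a,b,c\in\mathbb{Z},\ b^2-4Mac=D,\ b\equiv1\pmod{2M}\}$. $\Gamma_0^0(N/d,d):=\{\begin{pmatrix}\alpha&\beta\\\gamma&\delta\end{pmatrix}\in\Gamma_0(N/d):\beta\equiv0\pmod d\}$. For a group $G$ of integer matrices of determinant $1$ and a form $P$, $G_P=\{M\in G:P\circ M=P\}$ with $(P\circ M)(x,y)=P(\alpha x+\beta y,\gamma x+\delta y)$, acting on column vectors $(u,v)^T\in\mathbb{Z}^2$ by left multiplication; $\mathbb{Z}^2/G_P$ denotes the orbit set. *)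

(* Defs.v *)
From Stdlib Require Import ZArith Lia.
Open Scope Z_scope.

Record form := Form { fa : Z; fb : Z; fc : Z }.
Definition feval (P : form) (x y : Z) : Z :=
  fa P * x * x + fb P * x * y + fc P * y * y.

(* 2x2 integer matrix [[m11, m12], [m21, m22]] = [[alpha,beta],[gamma,delta]]. *)
Record mat := Mat { m11 : Z; m12 : Z; m21 : Z; m22 : Z }.
Definition det1 (M : mat) : Prop := m11 M * m22 M - m12 M * m21 M = 1.

Definition Gamma0 (N : Z) (M : mat) : Prop := det1 M /\ (N | m21 M).
Definition Gamma00 (N' d : Z) (M : mat) : Prop :=
  det1 M /\ (N' | m21 M) /\ (d | m12 M).

Definition fixes (P : form) (M : mat) : Prop :=
  forall x y, feval P (m11 M * x + m12 M * y) (m21 M * x + m22 M * y) = feval P x y.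

Definition act (M : mat) (w : Z * Z) : Z * Z :=
  (m11 M * fst w + m12 M * snd w, m21 M * fst w + m22 M * snd w).

(* w ~ w' in Z^2 / G_P : w' = M w for some M in G_P *)
Definition orbit_rel (G : mat -> Prop) (P : form) (w w' : Z * Z) : Prop :=
  exists M, G M /\ fixes P M /\ w' = act M w.

Definition squarefree (n : Z) : Prop := forall k, (k * k | n) -> k * k = 1.

Definition fundamental_disc (D : Z) : Prop :=
  (D mod 4 = 1 /\ squarefree D) \/
  (exists m, D = 4 * m /\ (m mod 4 = 2 \/ m mod 4 = 3) /\ squarefree m).

(* Main.v *)
Require Import Defs.
From Stdlib Require Import ZArith Lia.
Open Scope Z_scope.

Definition coefP (P : form) (M : mat) : Prop :=
  feval P (m11 M) (m21 M) = fa P /\ feval P (m12 M) (m22 M) = fc P /\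
  2*fa P*m11 M*m12 M + fb P*(m11 M*m22 M + m12 M*m21 M) + 2*fc P*m21 M*m22 M = fb P.

Lemma fixes_coef P M : fixes P M -> coefP P M.
Proof.
  intros H. destruct P as [p q r], M as [al be ga de]. unfold coefP; cbn [fa fb fc m11 m12 m21 m22].
  pose proof (H 1 0) as H1. pose proof (H 0 1) as H2. pose proof (H 1 1) as H3.
  unfold feval in *; cbn [fa fb fc m11 m12 m21 m22] in *.
  assert (E1: p * (al * 1 + be * 0) * (al * 1 + be * 0) + q * (al * 1 + be * 0) * (ga * 1 + de * 0) +
     r * (ga * 1 + de * 0) * (ga * 1 + de * 0) = p*al*al+q*al*ga+r*ga*ga) by ring.
  assert (E2: p * (al * 0 + be * 1) * (al * 0 + be * 1) + q * (al * 0 + be * 1) * (ga * 0 + de * 1) +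
     r * (ga * 0 + de * 1) * (ga * 0 + de * 1) = p*be*be+q*be*de+r*de*de) by ring.
  assert (F1: p*1*1+q*1*0+r*0*0 = p) by ring.
  assert (F2: p*0*0+q*0*1+r*1*1 = r) by ring.
  assert (F3: p*1*1+q*1*1+r*1*1 = p+q+r) by ring.
  split; [lia|split;[lia|]].
  assert (E: p * (al * 1 + be * 1) * (al * 1 + be * 1) + q * (al * 1 + be * 1) * (ga * 1 + de * 1) +
     r * (ga * 1 + de * 1) * (ga * 1 + de * 1) = (p*al*al+q*al*ga+r*ga*ga) + (p*be*be+q*be*de+r*de*de)
     + (2*p*al*be + q*(al*de+be*ga) + 2*r*ga*de)) by ring.
  lia.
Qed.

Lemma coef_fixes P M : coefP P M -> fixes P M.
Proof.
  intros [h1 [h2 h3]] x y. destruct P as [p q r], M as [al be ga de].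
  unfold feval in *; cbn [fa fb fc m11 m12 m21 m22] in *.
  transitivity ((p*al*al + q*al*ga + r*ga*ga)*x*x
     + (2*p*al*be + q*(al*de+be*ga) + 2*r*ga*de)*x*y
     + (p*be*be + q*be*de + r*de*de)*y*y); [ring|].
  rewrite h1, h2, h3. ring.
Qed.

Theorem lemma6p3 (N D a b c d : Z) :
  1 <= N -> 0 < D -> fundamental_disc D -> (4 * N | D - 1) ->
  b * b - 4 * (N * a) * c = D -> (2 * N | b - 1) ->
  0 < d -> (d | N) ->
  let Q := Form (N * a) b c in
  let Qd := Form ((N / d) * a) b (c * d) in
  let A := fun w : Z * Z => 0 < feval Qd (fst w) (snd w) /\ Z.gcd (snd w) (N / d) = 1 in
  let B := fun w : Z * Z => 0 < feval Q (fst w) (snd w) /\ Z.gcd (snd w) N = d in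
  let f := fun w : Z * Z => (fst w, d * snd w) in
  (forall w, A w -> B (f w)) /\
  (forall w w', A w -> A w' ->
     orbit_rel (Gamma00 (N / d) d) Qd w w' -> orbit_rel (Gamma0 N) Q (f w) (f w')) /\
  (forall w w', A w -> A w' ->
     orbit_rel (Gamma0 N) Q (f w) (f w') -> orbit_rel (Gamma00 (N / d) d) Qd w w') /\
  (forall w', B w' -> exists w, A w /\ orbit_rel (Gamma0 N) Q (f w) w').
Proof.
  intros HN HD Hfd HDm Hdisc Hb Hd [k Hk]. subst N.
  assert (Hkd: k*d/d = k) by (apply Z.div_mul; lia).
  intros Q Qd A B f. subst Q Qd A B f. rewrite Hkd.
  split; [|split; [|split]].
  - intros [u v] [Hpos Hg]; simpl in *. split.
    + unfold feval in *; cbn [fa fb fc m11 m12 m21 m22] in *. nia.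
    + rewrite (Z.mul_comm k d), Z.gcd_mul_mono_l, Hg, Z.abs_eq; lia.
  - intros [u v] [u' v'] _ _ [M [[Hdet [Hg1 Hg2]] [Hfix Heq]]].
    destruct M as [al be ga de]; simpl in *. destruct Hg1 as [g Hg], Hg2 as [e He].
    subst ga be. exists (Mat al e (g*k*d) de). split; [|split].
    + split; unfold det1 in *; simpl in *; [lia|exists g; ring].
    + apply coef_fixes. apply fixes_coef in Hfix. unfold coefP in *; cbn [fa fb fc m11 m12 m21 m22] in *.
      destruct Hfix as [h1 [h2 h3]]. unfold feval in *; cbn [fa fb fc m11 m12 m21 m22] in *.
      split; [nia|split;[|nia]].
      apply (Z.mul_reg_l _ _ d); [lia|]. nia.
    + unfold act in *; simpl in *. injection Heq; intros; subst. f_equal; ring.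
  - intros [u v] [u' v'] _ _ [M [[Hdet Hg1] [Hfix Heq]]].
    destruct M as [al be ga de]; simpl in *. destruct Hg1 as [g Hg]. subst ga.
    exists (Mat al (d*be) (g*k) de). split; [|split].
    + split; unfold det1 in *; simpl in *; [lia|split; [exists g; ring| exists be; ring]].
    + apply coef_fixes. apply fixes_coef in Hfix. unfold coefP in *; cbn [fa fb fc m11 m12 m21 m22] in *.
      destruct Hfix as [h1 [h2 h3]]. unfold feval in *; cbn [fa fb fc m11 m12 m21 m22] in *.
      split; [|split;[nia|nia]].
      apply (Z.mul_reg_l _ _ d); [lia|]. nia.
    + unfold act in *; simpl in *. injection Heq; intros H1 H2.
      assert (v' = g*k*u + de*v).
      { apply (Z.mul_reg_l _ _ d); [lia|]. nia. }
      subst. f_equal; ring.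
  - intros [u' v'] [Hpos Hg]. simpl in *.
    assert (Hdv: (d | v')) by (rewrite <- Hg; apply Z.gcd_divide_l).
    destruct Hdv as [v Hv]. subst v'.
    exists (u', v). split; [split|].
    + unfold feval in *; cbn [fa fb fc m11 m12 m21 m22 fst snd] in *.
      set (X := k * a * u' * u' + b * u' * v + c * d * v * v).
      assert (E: k * d * a * u' * u' + b * u' * (v * d) + c * (v * d) * (v * d) = d * X) by (unfold X; ring).
      rewrite E in Hpos. apply (proj1 (Z.mul_pos_cancel_l _ _ Hd) Hpos).
    + simpl. rewrite (Z.mul_comm k d), (Z.mul_comm v d), Z.gcd_mul_mono_l, Z.abs_eq in Hg by lia.
      apply (Z.mul_reg_l _ _ d); lia.
    + exists (Mat 1 0 0 1). split; [|split].
      * split; [unfold det1; simpl; lia | apply Z.divide_0_r].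
      * intros x y; unfold feval; cbn [fa fb fc m11 m12 m21 m22]; ring.
      * unfold act; cbn [fst snd m11 m12 m21 m22]. f_equal; ring.
Qed.
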